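(* Let $\varphi=\frac{1+\sqrt5}{2}$, $F_n=\frac{\varphi^n-(-1/\varphi)^n}{\varphi+1/\varphi}$, $F_0!=1$, $F_n!=F_1\cdots F_n$. For commuting variables $x,y$ and $n\ge1$ let $(x+y)_F^n=\prod_{k=0}^{n-1}(x+(-1)^k\varphi^{n-1-2k}y)$, $(x+y)_F^0=1$, and let $(x-y)_F^n$ denote the same expression with $y$ replaced by $-y$. Let $D_F^x$ (resp. $D_F^y$) be the Golden derivative in $x$ (resp. $y$), acting on polynomials as the linear operator with $D_F^x x^m=F_mx^{m-1}$ ($m\ge1$), $D_F^x1=0$, other variables treated as constants (for nonzero argument this coincides with $D_F^xf(x)=\frac{f(\varphi x)-f(-x/\varphi)}{(\varphi+1/\varphi)x}$). Then for every $n\ge1$: $$D_F^x(x+y)_F^n=F_n(x+y)_F^{n-1},\qquad D_F^y(x+y)_F^n=F_n(x-y)_F^{n-1},$$ and for every $k\ge0$, $$(D_F^y)^{2k}(x+y)_F^{2k}=(-1)^kF_{2k}!,\qquad (D_F^y)^{2k+1}(x+y)_F^{2k+1}=(-1)^kF_{2k+1}!.$$ *)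

(* Defs.v *)
(* Bivariate polynomials in commuting x, y are modelled as
   {poly {poly R}}: the outer variable is x ('X), the inner one is y ('X%:P). *)
From HB Require Import structures.
From mathcomp Require Import all_boot all_order all_algebra.
Set Implicit Arguments. Unset Strict Implicit. Unset Printing Implicit Defensive.
Import Order.TTheory GRing.Theory Num.Theory.
Local Open Scope ring_scope.

Section Golden.
Variable R : rcfType.

Definition phi : R := (1 + Num.sqrt 5) / 2.

Definition Fib (n : nat) : R :=
  (phi ^+ n - (- phi^-1) ^+ n) / (phi + phi^-1).

Definition Ffact (n : nat) : R := \prod_(1 <= i < n.+1) Fib i.

Definition xvar : {poly {poly R}} := 'X.
Definition yvar : {poly {poly R}} := ('X : {poly R})%:P.
Definition cst (c : R) : {poly {poly R}} := c%:P%:P.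

Definition golden_binom (s : R) (n : nat) : {poly {poly R}} :=
  \prod_(k < n)
     (xvar + cst (s * (-1) ^+ k * phi ^ ((n.-1)%:Z - (2 * k)%:Z)) * yvar).

Definition xpyF (n : nat) := golden_binom 1 n.
Definition xmyF (n : nat) := golden_binom (-1) n.

Definition DF1 (q : {poly R}) : {poly R} :=
  \poly_(i < size q) (Fib i.+1 * q`_i.+1).

Definition DFx (p : {poly {poly R}}) : {poly {poly R}} :=
  \poly_(i < size p) ((Fib i.+1)%:P * p`_i.+1).

Definition DFy (p : {poly {poly R}}) : {poly {poly R}} :=
  map_poly DF1 p.

End Golden.

(* Main.v *)
Require Import Defs.
From HB Require Import structures.
From mathcomp Require Import all_boot all_order all_algebra.
From mathcomp Require Import ring lra zify.
Import Order.TTheory GRing.Theory Num.Theory.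
Local Open Scope ring_scope.

Lemma phi_gt0 (R : rcfType) : 0 < phi R.
Proof. rewrite /phi divr_gt0 //; apply: ltr_wpDr => //; exact: sqrtr_ge0. Qed.

Lemma phi_neq0 (R : rcfType) : phi R != 0.
Proof. by rewrite gt_eqF // phi_gt0. Qed.

Lemma cphi_neq0 (R : rcfType) : phi R + (phi R)^-1 != 0.
Proof. by rewrite gt_eqF // addr_gt0 ?invr_gt0 ?phi_gt0. Qed.

Lemma FibE (R : rcfType) n :
  Fib R n * (phi R + (phi R)^-1) = phi R ^+ n - (- (phi R)^-1) ^+ n.
Proof. by rewrite /Fib divfK // cphi_neq0. Qed.

Lemma cstM (R : rcfType) (a b : R) : cst (a * b) = cst a * cst b.
Proof. by rewrite /cst !polyCM. Qed.
Lemma cst1 (R : rcfType) : cst (1 : R) = 1.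
Proof. by rewrite /cst !polyC1. Qed.
Lemma cst0 (R : rcfType) : cst (0 : R) = 0.
Proof. by rewrite /cst !polyC0. Qed.

Definition lin (R : rcfType) (a b : R) := cst a * xvar R + cst b * yvar R.
Arguments lin {R} a b.

Lemma lin_comb (R : rcfType) (p q a b a' b' : R) :
  cst p * lin a b - cst q * lin a' b' = lin (p * a - q * a') (p * b - q * b').
Proof. rewrite /lin /cst; ring. Qed.

Lemma comp_scaleX (A : comNzRingType) (a : A) (p : {poly A}) :
  p \Po (a *: 'X) = \poly_(i < size p) (p`_i * a ^+ i).
Proof. rewrite comp_polyE poly_def; apply: eq_bigr => i _; by rewrite exprZn scalerA. Qed.

Lemma gen_spec (A : comNzRingType) (f : nat -> A) (u v c : A)
  (hf : forall n, f n * c = u ^+ n - v ^+ n) (p : {poly A}) :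
  \poly_(i < size p) (f i.+1 * p`_i.+1) * ('X * c%:P) =
  (p \Po (u *: 'X)) - (p \Po (v *: 'X)).
Proof.
rewrite !comp_scaleX; apply/polyP => j.
rewrite mulrA coefMC coefMX coefB !coef_poly.
case: j => [|j] /=; first by rewrite subrr mul0r.
case: (ltnP j.+1 (size p)) => h.
  by rewrite (ltnW h) mulrAC hf; ring.
by rewrite (nth_default 0 h) !mulr0 !if_same mul0r subrr.
Qed.

Definition mphi (R : rcfType) := - (phi R)^-1.
Definition cphi (R : rcfType) := phi R + (phi R)^-1.

Lemma DFx_spec (R : rcfType) (p : {poly {poly R}}) :
  DFx p * (xvar R * cst (cphi R)) =
  (p \Po ((phi R)%:P *: 'X)) - (p \Po ((mphi R)%:P *: 'X)).
Proof.
rewrite /DFx /xvar /cst; apply: (@gen_spec _ (fun i => (Fib R i)%:P)) => n.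
by rewrite -rmorphM /cphi FibE rmorphB !rmorphXn.
Qed.

Lemma DF1_spec (R : rcfType) (q : {poly R}) :
  DF1 q * ('X * (cphi R)%:P) =
  (q \Po (phi R *: 'X)) - (q \Po (mphi R *: 'X)).
Proof. by rewrite /DF1; apply: gen_spec => n; rewrite /cphi FibE. Qed.

Lemma DF1_0 (R : rcfType) : DF1 (0 : {poly R}) = 0.
Proof. by rewrite /DF1 size_poly0 poly_def big_ord0. Qed.

Lemma DFy_spec (R : rcfType) (p : {poly {poly R}}) :
  DFy p * (yvar R * cst (cphi R)) =
  map_poly (comp_poly (phi R *: 'X)) p - map_poly (comp_poly (mphi R *: 'X)) p.
Proof.
apply/polyP => j.
rewrite /yvar /cst -polyCM coefMC coefB /DFy coef_map_id0 ?DF1_0 //.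
by rewrite !coef_map /= DF1_spec.
Qed.

Lemma lin_scale (R : rcfType) (c a b : R) : cst c * lin a b = lin (c * a) (c * b).
Proof. rewrite /lin /cst; ring. Qed.

Lemma Sx_lin (R : rcfType) (c a b : R) :
  (lin a b) \Po (c%:P *: 'X) = lin (a * c) b.
Proof.
rewrite /lin comp_polyD !comp_polyM /cst (comp_polyC (a%:P)) (comp_polyC (b%:P)).
rewrite /xvar comp_polyX /yvar (comp_polyC 'X).
by rewrite -mul_polyC mulrA -!polyCM.
Qed.

Lemma Sy_lin (R : rcfType) (c a b : R) :
  map_poly (comp_poly (c *: 'X)) (lin a b) = lin a (b * c).
Proof.
rewrite /lin !rmorphD !rmorphM /= /cst !(map_polyC (comp_poly (c *: 'X))).
have hC : forall d : R, d%:P \Po (c *: 'X) = d%:P by move=> d; apply: comp_polyC.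
rewrite /= !hC comp_polyX /xvar map_polyX /yvar.
rewrite -mul_polyC !polyCM; ring.
Qed.

Definition ak (R : rcfType) (s : R) (n k : nat) :=
  s * (-1) ^+ k * phi R ^ ((n.-1)%:Z - (2 * k)%:Z).
Arguments ak {R} s n k.

Lemma G_lin (R : rcfType) (s : R) n :
  golden_binom s n = \prod_(k < n) lin 1 (ak s n k).
Proof. by apply: eq_bigr => k _; rewrite /lin cst1 mul1r. Qed.

Lemma ak_up (R : rcfType) (s : R) n k : (k < n)%N -> ak s n.+1 k = phi R * ak s n k.
Proof.
case: n => // n _; rewrite /ak /=.
have -> : (n.+1%:Z - (2 * k)%:Z) = (n%:Z - (2 * k)%:Z) + 1 by rewrite -addn1 PoszD; ring.
by rewrite expfzDr ?phi_neq0 // expr1z; ring.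
Qed.

Lemma ak_shift (R : rcfType) (s : R) n k : (k < n)%N ->
  ak s n.+1 k.+1 = mphi R * ak s n k.
Proof.
case: n => // n _; rewrite /ak /mphi /=.
have -> : (n.+1%:Z - (2 * k.+1)%:Z) = (n%:Z - (2 * k)%:Z) + (-1).
  by rewrite mulnS -addn1 !PoszD; ring.
by rewrite expfzDr ?phi_neq0 // exprN1 exprS; ring.
Qed.

Lemma cstX (R : rcfType) (a : R) n : cst (a ^+ n) = cst a ^+ n.
Proof. by rewrite /cst !rmorphXn. Qed.

Lemma Gx1 (R : rcfType) (s : R) n :
  \prod_(k < n.+1) lin (phi R) (ak s n.+1 k) =
  cst (phi R ^+ n) * golden_binom s n * lin (phi R) (ak s n.+1 n).
Proof.
rewrite big_ord_recr /= G_lin; congr (_ * _).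
rewrite (eq_bigr (fun k : 'I_n => cst (phi R) * lin 1 (ak s n k))).
  by rewrite big_split /= prodr_const card_ord cstX.
by move=> k _; rewrite lin_scale mulr1 ak_up.
Qed.

Lemma Gx2 (R : rcfType) (s : R) n :
  \prod_(k < n.+1) lin (mphi R) (ak s n.+1 k) =
  lin (mphi R) (ak s n.+1 0) * (cst (mphi R ^+ n) * golden_binom s n).
Proof.
rewrite big_ord_recl /= G_lin; congr (_ * _).
rewrite (eq_bigr (fun k : 'I_n => cst (mphi R) * lin 1 (ak s n k))).
  by rewrite big_split /= prodr_const card_ord cstX.
by move=> k _; rewrite lin_scale mulr1 ?lift0 ak_shift.
Qed.

Lemma Gy1 (R : rcfType) (s : R) n :
  \prod_(k < n.+1) lin 1 (ak s n.+1 k * phi R) =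
  lin 1 (ak s n.+1 0 * phi R) * golden_binom (-s) n.
Proof.
rewrite big_ord_recl /= G_lin; congr (_ * _).
apply: eq_bigr => k _; rewrite ?lift0 ak_shift // /ak /mphi; congr (lin _ _).
by field; rewrite phi_neq0.
Qed.

Lemma Gy2 (R : rcfType) (s : R) n :
  \prod_(k < n.+1) lin 1 (ak s n.+1 k * mphi R) =
  golden_binom (-s) n * lin 1 (ak s n.+1 n * mphi R).
Proof.
rewrite big_ord_recr /= G_lin; congr (_ * _).
apply: eq_bigr => k _; rewrite ak_up // /ak /mphi; congr (lin _ _).
by field; rewrite phi_neq0.
Qed.

Lemma lin_x0 (R : rcfType) (a : R) : lin a 0 = cst a * xvar R.
Proof. by rewrite /lin /cst !polyC0 mul0r addr0. Qed.

Lemma lin_y0 (R : rcfType) (b : R) : lin 0 b = cst b * yvar R.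
Proof. by rewrite /lin /cst !polyC0 mul0r add0r. Qed.

Lemma zx_neq0 (R : rcfType) : xvar R * cst (cphi R) != 0.
Proof.
apply: mulf_neq0; first by rewrite /xvar polyX_eq0.
by rewrite /cst !polyC_eq0 cphi_neq0.
Qed.

Lemma zy_neq0 (R : rcfType) : yvar R * cst (cphi R) != 0.
Proof.
apply: mulf_neq0; first by rewrite /yvar polyC_eq0 polyX_eq0.
by rewrite /cst !polyC_eq0 cphi_neq0.
Qed.

Lemma phi_exp_inv (R : rcfType) n :
  phi R ^ (n%:Z - (2 * n)%:Z) = (phi R ^+ n)^-1.
Proof.
have -> : (n%:Z - (2 * n)%:Z) = - n%:Z by rewrite mulSn mul1n PoszD; ring.
by rewrite -exprnN.
Qed.

Lemma DFx_G (R : rcfType) (s : R) n :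
  DFx (golden_binom s n.+1) = cst (Fib R n.+1) * golden_binom s n.
Proof.
apply: (mulIf (zx_neq0 R)); rewrite DFx_spec G_lin !rmorph_prod /=.
under eq_bigr do rewrite Sx_lin mul1r.
under [X in _ - X]eq_bigr do rewrite Sx_lin mul1r.
rewrite Gx1 Gx2.
have -> : forall (G A B : {poly {poly R}}) (a b : R),
  cst a * G * A - B * (cst b * G) = G * (cst a * A - cst b * B).
  by move=> *; ring.
rewrite lin_comb.
have -> : phi R ^+ n * ak s n.+1 n - mphi R ^+ n * ak s n.+1 0 = 0.
  rewrite /ak /= phi_exp_inv muln0 subr0 -exprnP /mphi (exprNn (phi R)^-1).
  set pn := phi R ^+ n.
  have hp : pn != 0 by rewrite expf_neq0 // phi_neq0.
  rewrite expr0 mulr1 exprVn -/pn.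
  by field.
rewrite lin_x0 /mphi -!exprSr -FibE cstM /cphi.
ring.

Qed.

Lemma DFy_G (R : rcfType) (s : R) n :
  DFy (golden_binom s n.+1) = cst (s * Fib R n.+1) * golden_binom (-s) n.
Proof.
apply: (mulIf (zy_neq0 R)); rewrite DFy_spec G_lin !rmorph_prod /=.
under eq_bigr do rewrite Sy_lin.
under [X in _ - X]eq_bigr do rewrite Sy_lin.
rewrite Gy1 Gy2.
have -> : forall (G A B : {poly {poly R}}),
  B * G - G * A = G * (cst 1 * B - cst 1 * A).
  by move=> *; rewrite cst1; ring.
rewrite lin_comb !mul1r subrr lin_y0.
have -> : ak s n.+1 0 * phi R - ak s n.+1 n * mphi R = s * Fib R n.+1 * cphi R.
  rewrite -mulrA FibE /ak /= phi_exp_inv muln0 subr0 -exprnP /mphi.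
  rewrite (exprNn (phi R)^-1) exprVn !exprS.
  set pn := phi R ^+ n.
  have hp : pn != 0 by rewrite expf_neq0 // phi_neq0.
  by field; rewrite hp phi_neq0.
rewrite !cstM; ring.
Qed.

Lemma Sy_cst (R : rcfType) (c a : R) :
  map_poly (comp_poly (c *: 'X)) (cst a) = cst a.
Proof.
rewrite /cst (map_polyC (comp_poly (c *: 'X))) /=.
have hC : forall d : R, d%:P \Po (c *: 'X) = d%:P by move=> d; apply: comp_polyC.
by rewrite hC.
Qed.

Lemma DFy_cstM (R : rcfType) (a : R) p : DFy (cst a * p) = cst a * DFy p.
Proof.
apply: (mulIf (zy_neq0 R)); rewrite DFy_spec -mulrA DFy_spec !rmorphM /= !Sy_cst.
by rewrite mulrBr.
Qed.

Lemma iter_cstM (R : rcfType) m (a : R) p :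
  iter m (@DFy R) (cst a * p) = cst a * iter m (@DFy R) p.
Proof. by elim: m => //= m ->; rewrite DFy_cstM. Qed.

Lemma iter_G (R : rcfType) m (s : R) :
  iter m (@DFy R) (golden_binom s m) = cst (s ^+ m * (-1) ^+ (m./2) * Ffact R m).
Proof.
elim: m s => [|m IH] s.
  by rewrite /= /golden_binom big_ord0 /Ffact big_geq // !expr0 !mul1r cst1.
rewrite iterSr DFy_G iter_cstM IH -cstM; congr cst.
have hs : (-1) ^+ (m.+1./2) = (-1) ^+ m * (-1) ^+ (m./2) :> R.
  rewrite -exprD -signr_odd -[in RHS]signr_odd; congr (_ ^+ _).
  by rewrite /= uphalf_half !oddD oddb.
rewrite hs /Ffact (big_nat_recr m.+1) //= (exprNn s) exprS; ring.

Qed.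

Theorem mainTheorem11 (R : rcfType) :
  (forall n : nat, (1 <= n)%N ->
     DFx (xpyF R n) = cst (Fib R n) * xpyF R n.-1 /\
     DFy (xpyF R n) = cst (Fib R n) * xmyF R n.-1) /\
  (forall k : nat,
     iter (2 * k) (@DFy R) (xpyF R (2 * k)) = cst ((-1) ^+ k * Ffact R (2 * k)) /\
     iter (2 * k).+1 (@DFy R) (xpyF R (2 * k).+1)
       = cst ((-1) ^+ k * Ffact R (2 * k).+1)).
Proof.
split.
  case=> // n _; rewrite /xpyF /xmyF /= DFx_G DFy_G mul1r; by split.
move=> k; rewrite /xpyF !iter_G !expr1n !mul1r.
have h1 : (2 * k)./2 = k by rewrite mul2n doubleK.
have h2 : (2 * k).+1./2 = k by rewrite /= uphalf_half h1 mul2n odd_double.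
by rewrite h1 h2.
Qed.
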